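(* Let $0<q<1$, $\sigma,w\in\mathbb{C}$ with $w\ne0$ and $q^\sigma\notin q^{\mathbb{Z}}$ (complex powers of $w$ taken with one fixed branch of $\log w$). Then \[ \lim_{\substack{|\nu|\to\infty\\ \nu\in-\sigma-\mathbb{N}}}\sin(\pi\nu)\,q^{\nu(\nu+1)/4}\,w^{-\nu}\,\mathfrak{j}_\nu(2w;q) =-\sin(\pi\sigma)\,q^{-\sigma(1-\sigma)/2}\,\frac{(q^\sigma;q)_\infty(q^{1-\sigma};q)_\infty(-q^{1/2}w^2;q)_\infty}{(q;q)_\infty}. \]
   Context: Complex powers of $q$ are $q^s=e^{s\log q}$. $(a;q)_k=\prod_{j=0}^{k-1}(1-aq^j)$, $(a;q)_\infty=\lim_k(a;q)_k$, ${}_0\phi_1(;b;q,z)=\sum_{k\ge0}\frac{q^{k(k-1)}}{(q;q)_k(b;q)_k}z^k$, and \[ \mathfrak{j}_\nu(x;q)=q^{\nu(\nu+1)/4}\frac{(q^{\nu+1};q)_\infty}{(q;q)_\infty}\left(\frac{x}{2}\right)^{\nu}{}_0\phi_1\!\left(;q^{\nu+1};q,-q^{\nu+3/2}\frac{x^2}{4}\right). \] The limit is taken along $\nu=-\sigma-n$, $n\in\mathbb{N}$, $n\to\infty$. *)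

(* Defs.v *)
From Stdlib Require Import Reals ZArith.
From Coquelicot Require Import Coquelicot.
Open Scope R_scope.

(* Limit of a complex sequence, computed componentwise (meaningful when it converges). *)
Definition cLim (u : nat -> C) : C :=
  (real (Lim_seq (fun n => Re (u n))), real (Lim_seq (fun n => Im (u n)))).

Definition cSeries (a : nat -> C) : C := cLim (fun N => sum_n a N).

Definition cexp (z : C) : C :=
  cSeries (fun n => Cmult (RtoC (/ INR (fact n))) (Cpow z n)).

Definition csin (z : C) : C :=
  Cdiv (Cminus (cexp (Cmult Ci z)) (cexp (Copp (Cmult Ci z)))) (Cmult (RtoC 2) Ci).

Definition qpow (q : R) (s : C) : C := cexp (Cmult s (RtoC (ln q))).

Fixpoint qpoch (a : C) (q : R) (k : nat) : C :=
  match k with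
  | O => RtoC 1
  | S k' => Cmult (qpoch a q k') (Cminus (RtoC 1) (Cmult a (RtoC (q ^ k'))))
  end.

Definition qpoch_inf (a : C) (q : R) : C := cLim (fun k => qpoch a q k).

Definition phi01 (b : C) (q : R) (z : C) : C :=
  cSeries (fun k => Cmult (Cdiv (RtoC (q ^ (k * (k - 1))))
                                (Cmult (qpoch (RtoC q) q k) (qpoch b q k)))
                          (Cpow z k)).

(* Jackson-type q-Bessel function j_nu(x;q); the power (x/2)^nu is
   e^{nu * lx} where lx is a chosen logarithm of x/2. *)
Definition jfrak (nu x lx : C) (q : R) : C :=
  Cmult (Cmult (Cmult (qpow q (Cdiv (Cmult nu (Cplus nu (RtoC 1))) (RtoC 4)))
                      (Cdiv (qpoch_inf (qpow q (Cplus nu (RtoC 1))) q)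
                            (qpoch_inf (RtoC q) q)))
               (cexp (Cmult nu lx)))
        (phi01 (qpow q (Cplus nu (RtoC 1))) q
               (Cmult (Copp (qpow q (Cplus nu (RtoC (3/2)))))
                      (Cdiv (Cmult x x) (RtoC 4)))).

(* Main.v *)
Require Import Defs.
From Stdlib Require Import Reals ZArith Lra Lia.
From Coquelicot Require Import Coquelicot.
Open Scope R_scope.


Lemma C_lim_of_comp (u : nat -> C) (l : C) :
  is_lim_seq (fun n => Re (u n)) (Re l) ->
  is_lim_seq (fun n => Im (u n)) (Im l) ->
  filterlim u eventually (locally l).
Proof.
  intros H1 H2 P [eps HP].
  destruct (proj2 (is_lim_seq_spec _ _) H1 eps) as [N1 HN1].
  destruct (proj2 (is_lim_seq_spec _ _) H2 eps) as [N2 HN2].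
  exists (max N1 N2). intros n Hn. apply HP. split.
  - apply HN1. lia.
  - apply HN2. lia.
Qed.

Lemma C_lim_Re (u : nat -> C) (l : C) :
  filterlim u eventually (locally l) -> is_lim_seq (fun n => Re (u n)) (Re l).
Proof.
  intros H. apply (proj1 (is_lim_seq_spec _ _)). intros eps.
  destruct (H (fun z : C => Rabs (Re z - Re l) < eps)) as [N HN].
  - exists eps. intros y [Hy _]. exact Hy.
  - exists N. exact HN.
Qed.

Lemma C_lim_Im (u : nat -> C) (l : C) :
  filterlim u eventually (locally l) -> is_lim_seq (fun n => Im (u n)) (Im l).
Proof.
  intros H. apply (proj1 (is_lim_seq_spec _ _)). intros eps.
  destruct (H (fun z : C => Rabs (Im z - Im l) < eps)) as [N HN].
  - exists eps. intros y [_ Hy]. exact Hy.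
  - exists N. exact HN.
Qed.

Lemma cLim_eq (u : nat -> C) (l : C) :
  filterlim u eventually (locally l) -> cLim u = l.
Proof.
  intros H. unfold cLim.
  rewrite (is_lim_seq_unique _ _ (C_lim_Re _ _ H)).
  rewrite (is_lim_seq_unique _ _ (C_lim_Im _ _ H)).
  destruct l; reflexivity.
Qed.

Lemma Re_sum_n (a : nat -> C) N : Re (sum_n a N) = sum_n (fun n => Re (a n)) N.
Proof.
  induction N.
  - rewrite !sum_O. reflexivity.
  - rewrite !sum_Sn. rewrite <- IHN. reflexivity.
Qed.

Lemma Im_sum_n (a : nat -> C) N : Im (sum_n a N) = sum_n (fun n => Im (a n)) N.
Proof.
  induction N.
  - rewrite !sum_O. reflexivity.
  - rewrite !sum_Sn. rewrite <- IHN. reflexivity.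
Qed.

Definition Ec (z : C) : C := (exp (Re z) * cos (Im z), exp (Re z) * sin (Im z)).

Lemma im_le_Cmod (c : C) : Rabs (Im c) <= Cmod c.
Proof. destruct c as [x y]. unfold Cmod; simpl. rewrite <- sqrt_Rsqr_abs. apply sqrt_le_1_alt. unfold Rsqr. nra. Qed.

Lemma dmul (f g : R -> R) x df dg : is_derive f x df -> is_derive g x dg ->
  is_derive (fun t => f t * g t) x (df * g x + f x * dg).
Proof. intros H1 H2. apply (is_derive_mult f g x df dg H1 H2). intros; apply Rmult_comm. Qed.
Lemma dplus (f g : R -> R) x df dg : is_derive f x df -> is_derive g x dg ->
  is_derive (fun t => f t + g t) x (df + dg).
Proof. intros H1 H2. apply (is_derive_plus f g x df dg H1 H2). Qed.
Lemma dminus (f g : R -> R) x df dg : is_derive f x df -> is_derive g x dg ->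
  is_derive (fun t => f t - g t) x (df - dg).
Proof. intros H1 H2. apply (is_derive_minus f g x df dg H1 H2). Qed.

Section CEXP.
Variable z : C.
Definition cc (n : nat) : C := Cmult (RtoC (/ INR (fact n))) (Cpow z n).
Definition cr n := Re (cc n).
Definition ci n := Im (cc n).

Lemma cc_S n : Cmult (RtoC (INR (S n))) (cc (S n)) = Cmult z (cc n).
Proof.
  unfold cc. simpl Cpow.
  assert (H : INR (S n) * / INR (fact (S n)) = / INR (fact n)).
  { rewrite fact_simpl, mult_INR. field. split.
    - apply INR_fact_neq_0.
    - apply not_0_INR. lia. }
  rewrite <- H. rewrite RtoC_mult. ring.
Qed.

Lemma Cmod_cc n : Cmod (cc n) = / INR (fact n) * Cmod z ^ n.
Proof.
  unfold cc. rewrite Cmod_mult, Cmod_R, Cmod_pow.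
  rewrite Rabs_right; auto.
  apply Rle_ge. left. apply Rinv_0_lt_compat. apply INR_fact_lt_0.
Qed.

Lemma ex_exp_abs (x : R) : ex_series (fun n => / INR (fact n) * x ^ n).
Proof.
  exists (exp x). generalize (is_exp_Reals x). unfold is_pseries.
  apply is_series_ext. intros n. rewrite pow_n_pow. unfold scal; simpl; unfold mult; simpl. ring.
Qed.

Lemma CV_disk_cr x : CV_disk cr x.
Proof.
  unfold CV_disk.
  apply (@ex_series_le R_AbsRing R_CompleteNormedModule _ (fun n => / INR (fact n) * (Cmod z * Rabs x) ^ n)).
  2: apply ex_exp_abs.
  intros n. unfold norm; simpl. unfold abs; simpl. rewrite Rabs_Rabsolu, Rabs_mult, <- RPow_abs, Rpow_mult_distr.
  rewrite <- Rmult_assoc. apply Rmult_le_compat_r. apply pow_le, Rabs_pos.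
  rewrite <- Cmod_cc. apply re_le_Cmod.
Qed.

Lemma CV_disk_ci x : CV_disk ci x.
Proof.
  unfold CV_disk.
  apply (@ex_series_le R_AbsRing R_CompleteNormedModule _ (fun n => / INR (fact n) * (Cmod z * Rabs x) ^ n)).
  2: apply ex_exp_abs.
  intros n. unfold norm; simpl. unfold abs; simpl. rewrite Rabs_Rabsolu, Rabs_mult, <- RPow_abs, Rpow_mult_distr.
  rewrite <- Rmult_assoc. apply Rmult_le_compat_r. apply pow_le, Rabs_pos.
  rewrite <- Cmod_cc. apply im_le_Cmod.
Qed.

Lemma radius_inf (a : nat -> R) : (forall x, CV_disk a x) -> forall x, Rbar_lt (Rabs x) (CV_radius a).
Proof.
  intros H x. apply Rbar_lt_le_trans with (Rabs (Rabs x + 1)).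
  - simpl. rewrite (Rabs_right (Rabs x + 1)). lra. generalize (Rabs_pos x); lra.
  - apply (proj1 (Lub_Rbar_correct (CV_disk a))). apply H.
Qed.

Definition uu t := PSeries cr t.
Definition vv t := PSeries ci t.

Lemma PS_derive_cr : forall n, PS_derive cr n = Re z * cr n - Im z * ci n.
Proof.
  intros n. unfold PS_derive, cr, ci.
  rewrite <- re_scal_l. rewrite cc_S. unfold Re, Im; simpl; ring.
Qed.

Lemma PS_derive_ci : forall n, PS_derive ci n = Im z * cr n + Re z * ci n.
Proof.
  intros n. unfold PS_derive, cr, ci.
  rewrite <- im_scal_l. rewrite cc_S. unfold Re, Im; simpl; ring.
Qed.

Lemma ex_ps_cr x : ex_pseries cr x.
Proof. apply CV_disk_correct, CV_disk_cr. Qed.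
Lemma ex_ps_ci x : ex_pseries ci x.
Proof. apply CV_disk_correct, CV_disk_ci. Qed.

Lemma der_uu t : is_derive uu t (Re z * uu t - Im z * vv t).
Proof.
  unfold uu, vv.
  replace (Re z * PSeries cr t - Im z * PSeries ci t) with (PSeries (PS_derive cr) t).
  apply is_derive_PSeries, radius_inf, CV_disk_cr.
  rewrite (PSeries_ext _ (PS_plus (PS_scal (Re z) cr) (PS_scal (- Im z) ci))).
  rewrite PSeries_plus, !PSeries_scal. ring.
  apply ex_pseries_scal. apply Rmult_comm. apply ex_ps_cr.
  apply ex_pseries_scal. apply Rmult_comm. apply ex_ps_ci.
  intros n. rewrite PS_derive_cr. unfold PS_plus, PS_scal. simpl. unfold plus, scal; simpl.
  unfold mult; simpl. ring.
Qed.

Lemma der_vv t : is_derive vv t (Im z * uu t + Re z * vv t).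
Proof.
  unfold uu, vv.
  replace (Im z * PSeries cr t + Re z * PSeries ci t) with (PSeries (PS_derive ci) t).
  apply is_derive_PSeries, radius_inf, CV_disk_ci.
  rewrite (PSeries_ext _ (PS_plus (PS_scal (Im z) cr) (PS_scal (Re z) ci))).
  rewrite PSeries_plus, !PSeries_scal. ring.
  apply ex_pseries_scal. apply Rmult_comm. apply ex_ps_cr.
  apply ex_pseries_scal. apply Rmult_comm. apply ex_ps_ci.
  intros n. rewrite PS_derive_ci. unfold PS_plus, PS_scal. simpl. unfold plus, scal; simpl.
  unfold mult; simpl. ring.
Qed.

Definition H1 t := exp (- Re z * t) * (uu t * cos (Im z * t) + vv t * sin (Im z * t)).
Definition H2 t := exp (- Re z * t) * (vv t * cos (Im z * t) - uu t * sin (Im z * t)).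

Lemma dexp t : is_derive (fun t => exp (- Re z * t)) t (- Re z * exp (- Re z * t)).
Proof. auto_derive. auto. ring. Qed.
Lemma dcos t : is_derive (fun t => cos (Im z * t)) t (- Im z * sin (Im z * t)).
Proof. auto_derive. auto. ring. Qed.
Lemma dsin t : is_derive (fun t => sin (Im z * t)) t (Im z * cos (Im z * t)).
Proof. auto_derive. auto. ring. Qed.

Lemma dH1 t : is_derive H1 t 0.
Proof.
  unfold H1.
  eapply is_derive_ext. intros x; reflexivity.
  assert (D := dmul _ _ t _ _ (dexp t) (dplus _ _ t _ _ (dmul _ _ t _ _ (der_uu t) (dcos t))
     (dmul _ _ t _ _ (der_vv t) (dsin t)))).
  simpl in D. match type of D with is_derive _ _ ?d => replace 0 with d by ring end. exact D.
Qed.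

Lemma dH2 t : is_derive H2 t 0.
Proof.
  unfold H2.
  assert (D := dmul _ _ t _ _ (dexp t) (dminus _ _ t _ _ (dmul _ _ t _ _ (der_vv t) (dcos t))
     (dmul _ _ t _ _ (der_uu t) (dsin t)))).
  simpl in D. match type of D with is_derive _ _ ?d => replace 0 with d by ring end. exact D.
Qed.

Lemma H_const : H1 1 = 1 /\ H2 1 = 0.
Proof.
  assert (E1 : H1 0 = H1 1). { apply (eq_is_derive H1 0 1). intros; apply dH1. lra. }
  assert (E2 : H2 0 = H2 1). { apply (eq_is_derive H2 0 1). intros; apply dH2. lra. }
  rewrite <- E1, <- E2. unfold H1, H2, uu, vv. rewrite !PSeries_0.
  rewrite !Rmult_0_r, exp_0, cos_0, sin_0. unfold cr, ci, cc. simpl. split; field.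
Qed.

Lemma uv_1 : uu 1 = exp (Re z) * cos (Im z) /\ vv 1 = exp (Re z) * sin (Im z).
Proof.
  destruct H_const as [A B]. unfold H1, H2 in *. rewrite !Rmult_1_r in *.
  set (e := exp (- Re z)) in *. set (c := cos (Im z)) in *. set (s := sin (Im z)) in *.
  assert (Hcs : c * c + s * s = 1). { unfold c, s. rewrite <- (sin2_cos2 (Im z)). unfold Rsqr. ring. }
  assert (He : exp (Re z) * e = 1). { unfold e. rewrite <- exp_plus. replace (Re z + - Re z) with 0 by ring. apply exp_0. }
  split.
  - transitivity (exp (Re z) * (e * (uu 1 * c + vv 1 * s)) * c - exp (Re z) * (e * (vv 1 * c - uu 1 * s)) * s).
    + replace (exp (Re z) * (e * (uu 1 * c + vv 1 * s)) * c - exp (Re z) * (e * (vv 1 * c - uu 1 * s)) * s)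
        with ((exp (Re z) * e) * uu 1 * (c * c + s * s)) by ring. rewrite He, Hcs. ring.
    + rewrite A, B. ring.
  - transitivity (exp (Re z) * (e * (uu 1 * c + vv 1 * s)) * s + exp (Re z) * (e * (vv 1 * c - uu 1 * s)) * c).
    + replace (exp (Re z) * (e * (uu 1 * c + vv 1 * s)) * s + exp (Re z) * (e * (vv 1 * c - uu 1 * s)) * c)
        with ((exp (Re z) * e) * vv 1 * (c * c + s * s)) by ring. rewrite He, Hcs. ring.
    + rewrite A, B. ring.
Qed.

End CEXP.

Lemma cexp_Ec (z : C) : cexp z = Ec z.
Proof.
  unfold cexp, cSeries, cLim, Ec.
  destruct (uv_1 z) as [A B]. unfold uu, vv, PSeries, Series in A, B.
  rewrite <- A, <- B. f_equal; f_equal; apply Lim_seq_ext; intros N.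
  - rewrite Re_sum_n. apply sum_n_ext. intros n. unfold cr, cc. rewrite pow1, Rmult_1_r; reflexivity.

  - rewrite Im_sum_n. apply sum_n_ext. intros n. unfold ci, cc. rewrite pow1, Rmult_1_r; reflexivity.

Qed.


Lemma Ec_plus a b : Ec (Cplus a b) = Cmult (Ec a) (Ec b).
Proof.
  destruct a as [a1 a2], b as [b1 b2]. unfold Ec, Re, Im; simpl.
  rewrite exp_plus, cos_plus, sin_plus.
  apply injective_projections; simpl; ring.
Qed.

Lemma cexp_plus a b : cexp (Cplus a b) = Cmult (cexp a) (cexp b).
Proof. rewrite !cexp_Ec. apply Ec_plus. Qed.

Lemma cexp_R x : cexp (RtoC x) = RtoC (exp x).
Proof.
  rewrite cexp_Ec. unfold Ec, RtoC, Re, Im; simpl. rewrite cos_0, sin_0.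
  apply injective_projections; simpl; ring.
Qed.

Lemma cexp_0 : cexp (RtoC 0) = RtoC 1.
Proof. rewrite cexp_R, exp_0. reflexivity. Qed.

Lemma Cmod_cexp z : Cmod (cexp z) = exp (Re z).
Proof.
  rewrite cexp_Ec. unfold Ec, Cmod. cbn [fst snd].
  replace ((exp (Re z) * cos (Im z)) ^ 2 + (exp (Re z) * sin (Im z)) ^ 2) with (exp (Re z) ^ 2 * (Rsqr (sin (Im z)) + Rsqr (cos (Im z)))) by (unfold Rsqr; ring).


  rewrite sin2_cos2, Rmult_1_r. apply sqrt_pow2. left; apply exp_pos.
Qed.

Lemma cexp_neq0 z : cexp z <> RtoC 0.
Proof.
  intros H. assert (Hm := Cmod_cexp z). rewrite H, Cmod_0 in Hm.
  generalize (exp_pos (Re z)). lra.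
Qed.

Lemma cexp_opp z : Cmult (cexp (Copp z)) (cexp z) = RtoC 1.
Proof.
  rewrite <- cexp_plus. replace (Cplus (Copp z) z) with (RtoC 0) by ring. apply cexp_0.
Qed.

Lemma cexp_iR t : cexp (Cmult Ci (RtoC t)) = (cos t, sin t).
Proof.
  rewrite cexp_Ec. unfold Ec.
  replace (Re (Cmult Ci (RtoC t))) with 0 by (unfold Re; simpl; ring).
  replace (Im (Cmult Ci (RtoC t))) with t by (unfold Im; simpl; ring).
  rewrite exp_0. apply injective_projections; simpl; ring.
Qed.

Lemma cos_sin_npi n : cos (PI * INR n) = (-1) ^ n /\ sin (PI * INR n) = 0.
Proof.
  induction n.
  - simpl. rewrite Rmult_0_r, cos_0, sin_0. auto.
  - rewrite S_INR. replace (PI * (INR n + 1)) with (PI * INR n + PI) by ring.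
    rewrite neg_cos, neg_sin. destruct IHn as [A B]. rewrite A, B. simpl. split; ring.
Qed.

Lemma csin_shift w n :
  csin (Cminus w (RtoC (PI * INR n))) = Cmult (RtoC ((-1) ^ n)) (csin w).
Proof.
  unfold csin.
  replace (Copp (Cmult Ci (Cminus w (RtoC (PI * INR n)))))
    with (Cplus (Copp (Cmult Ci w)) (Cmult Ci (RtoC (PI * INR n)))) by ring.
  replace (Cmult Ci (Cminus w (RtoC (PI * INR n))))
    with (Cplus (Cmult Ci w) (Cmult Ci (RtoC (- (PI * INR n))))) by (rewrite RtoC_opp; ring).
  rewrite !cexp_plus, !cexp_iR. rewrite cos_neg, sin_neg.
  destruct (cos_sin_npi n) as [A B]. rewrite A, B.
  replace (- 0) with 0 by ring.
  replace ((-1) ^ n, 0) with (RtoC ((-1) ^ n)) by reflexivity.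
  field. intros H. apply (f_equal Im) in H. unfold Im in H; simpl in H. lra.
Qed.

Lemma csin_opp w : csin (Copp w) = Copp (csin w).
Proof.
  unfold csin.
  replace (Cmult Ci (Copp w)) with (Copp (Cmult Ci w)) by ring.
  replace (Copp (Copp (Cmult Ci w))) with (Cmult Ci w) by ring.
  field. intros H. apply (f_equal Im) in H. unfold Im in H; simpl in H. lra.
Qed.

Section QP.
Variable q : R.
Hypothesis Hq : 0 < q.

Lemma qpow_plus a b : qpow q (Cplus a b) = Cmult (qpow q a) (qpow q b).
Proof. unfold qpow. rewrite <- cexp_plus. f_equal. ring. Qed.

Lemma qpow_R x : qpow q (RtoC x) = RtoC (Rpower q x).
Proof. unfold qpow, Rpower. rewrite <- RtoC_mult, cexp_R. reflexivity. Qed.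

Lemma qpow_nat n : qpow q (RtoC (INR n)) = RtoC (q ^ n).
Proof. rewrite qpow_R, Rpower_pow; auto. Qed.

Lemma qpow_Z m : qpow q (RtoC (IZR m)) = RtoC (powerRZ q m).
Proof. rewrite qpow_R, powerRZ_Rpower; auto. Qed.

Lemma qpow_0 : qpow q (RtoC 0) = RtoC 1.
Proof. rewrite qpow_R. unfold Rpower. rewrite Rmult_0_l, exp_0. reflexivity. Qed.

Lemma qpow_1 : qpow q (RtoC 1) = RtoC q.
Proof. rewrite qpow_R, Rpower_1; auto. Qed.

Lemma Cmod_qpow s : Cmod (qpow q s) = Rpower q (Re s).
Proof. unfold qpow, Rpower. rewrite Cmod_cexp. f_equal. unfold Re; simpl. ring. Qed.

Lemma qpow_neq0 s : qpow q s <> RtoC 0.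
Proof. apply cexp_neq0. Qed.

Lemma qpow_mul_nat n s : qpow q (Cmult (RtoC (INR n)) s) = Cpow (qpow q s) n.
Proof.
  induction n.
  - simpl. replace (Cmult (RtoC 0) s) with (RtoC 0) by ring. apply qpow_0.
  - rewrite S_INR. simpl Cpow. rewrite <- IHn, <- qpow_plus. f_equal.
    rewrite RtoC_plus. ring.
Qed.
End QP.

Lemma sumf_lim (f : nat -> nat -> R) (g : nat -> R) K :
  (forall k, is_lim_seq (fun n => f n k) (g k)) ->
  is_lim_seq (fun n => sum_f_R0 (f n) K) (sum_f_R0 g K).
Proof.
  intros H. induction K.
  - simpl. apply H.
  - simpl. apply is_lim_seq_plus'. apply IHK. apply H.
Qed.

Lemma ser_tail_bound (a M : nat -> R) K :
  (forall k, Rabs (a k) <= M k) -> ex_series M ->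
  Rabs (Series (fun k => a (S K + k)%nat)) <= Series (fun k => M (S K + k)%nat).
Proof.
  intros Hb HM.
  assert (HMt : ex_series (fun k => M (S K + k)%nat)) by (apply ex_series_incr_n; auto).
  assert (Hat : ex_series (fun k => Rabs (a (S K + k)%nat))).
  { apply (@ex_series_le R_AbsRing R_CompleteNormedModule _ (fun k => M (S K + k)%nat)).
    intros k. unfold norm; simpl; unfold abs; simpl. rewrite Rabs_Rabsolu. apply Hb.
    apply ex_series_incr_n; auto. }
  eapply Rle_trans. apply Series_Rabs. exact Hat.
  apply Series_le. intros k. split. apply Rabs_pos. apply Hb. apply ex_series_incr_n; auto.
Qed.

Lemma tannery_R (f : nat -> nat -> R) (g M : nat -> R) :
  (forall k, is_lim_seq (fun n => f n k) (g k)) ->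
  (forall n k, Rabs (f n k) <= M k) -> ex_series M ->
  is_lim_seq (fun n => Series (f n)) (Series g).
Proof.
  intros Hl Hb HM.
  assert (Hg : forall k, Rabs (g k) <= M k).
  { intros k. assert (X := is_lim_seq_le _ _ _ _ (fun n => Hb n k) (is_lim_seq_abs _ _ (Hl k)) (is_lim_seq_const (M k))).
    simpl in X. exact X. }
  assert (exf : forall n, ex_series (f n)).
  { intros n. apply (@ex_series_le R_AbsRing R_CompleteNormedModule _ M); auto.
    }
  assert (exg : ex_series g).
  { apply (@ex_series_le R_AbsRing R_CompleteNormedModule _ M); auto.
    }
  set (T := fun K => Series (fun k => M (S K + k)%nat)).
  assert (HT : is_lim_seq T 0).
  { apply is_lim_seq_ext with (fun K => Series M - sum_f_R0 M K).
    - intros K. unfold T. rewrite (Series_incr_n M (S K)); auto. simpl. ring. lia.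
    - replace (Finite 0) with (Finite (Series M - Series M)) by (f_equal; ring).
      apply is_lim_seq_minus'. apply is_lim_seq_const.
      apply is_lim_seq_ext with (sum_n M). intros; apply sum_n_Reals.
      apply Series_correct; auto. }
  apply (proj1 (is_lim_seq_spec _ _)). intros eps.
  assert (He3 : 0 < eps / 3) by (generalize (cond_pos eps); lra).
  destruct (proj2 (is_lim_seq_spec _ _) HT (mkposreal _ He3)) as [K HK].
  assert (HK' := HK K (le_n _)). simpl in HK'. rewrite Rminus_0_r in HK'.
  destruct (proj2 (is_lim_seq_spec _ _) (sumf_lim f g K Hl) (mkposreal _ He3)) as [N HN].
  exists N. intros n Hn. specialize (HN n Hn). simpl in HN.
  rewrite (Series_incr_n (f n) (S K)), (Series_incr_n g (S K)); auto; try lia. simpl pred.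
  assert (B1 := ser_tail_bound (f n) M K (Hb n) HM).
  assert (B2 := ser_tail_bound g M K Hg HM).
  fold (T K) in B1, B2.
  assert (0 <= T K) by (eapply Rle_trans; [apply Rabs_pos| exact B1]).
  rewrite Rabs_right in HK' by lra.
  set (a1 := sum_f_R0 (f n) K) in *. set (a2 := sum_f_R0 g K) in *.
  set (b1 := Series (fun k => f n (S K + k)%nat)) in *.
  set (b2 := Series (fun k => g (S K + k)%nat)) in *.
  replace (a1 + b1 - (a2 + b2)) with ((a1 - a2) + (b1 - b2)) by ring.
  eapply Rle_lt_trans. apply Rabs_triang.
  unfold Rminus at 2. eapply Rle_lt_trans. apply Rplus_le_compat_l. apply Rabs_triang.
  rewrite Rabs_Ropp. lra.
Qed.

Definition Ccv (u : nat -> C) (l : C) := filterlim u eventually (locally l).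
Definition Cser (a : nat -> C) (S : C) := Ccv (sum_n a) S.

Lemma Ccv_iff u l : Ccv u l <->
  (is_lim_seq (fun n => Re (u n)) (Re l) /\ is_lim_seq (fun n => Im (u n)) (Im l)).
Proof.
  split.
  - intros H; split; [apply C_lim_Re | apply C_lim_Im]; exact H.
  - intros [H1 H2]; apply C_lim_of_comp; auto.
Qed.

Lemma Ccv_unique u l1 l2 : Ccv u l1 -> Ccv u l2 -> l1 = l2.
Proof. intros H1 H2. rewrite <- (cLim_eq _ _ H1). apply cLim_eq; auto. Qed.

Lemma Ccv_ext u v l : (forall n, u n = v n) -> Ccv u l -> Ccv v l.
Proof.
  intros E H. apply Ccv_iff in H. destruct H as [H1 H2]. apply Ccv_iff. split.
  - eapply is_lim_seq_ext; [|exact H1]. intros n; simpl; rewrite E; auto.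
  - eapply is_lim_seq_ext; [|exact H2]. intros n; simpl; rewrite E; auto.
Qed.

Lemma Ccv_ext_loc u v l N : (forall n, (N <= n)%nat -> u n = v n) -> Ccv u l -> Ccv v l.
Proof.
  intros E H. apply Ccv_iff in H. destruct H as [H1 H2]. apply Ccv_iff. split.
  - eapply is_lim_seq_ext_loc; [|exact H1]. exists N. intros n Hn; simpl; rewrite E; auto.
  - eapply is_lim_seq_ext_loc; [|exact H2]. exists N. intros n Hn; simpl; rewrite E; auto.
Qed.

Lemma Ccv_const c : Ccv (fun _ => c) c.
Proof. apply Ccv_iff. split; apply is_lim_seq_const. Qed.

Lemma Ccv_plus u v a b : Ccv u a -> Ccv v b -> Ccv (fun n => Cplus (u n) (v n)) (Cplus a b).
Proof.
  intros Hu Hv. apply Ccv_iff in Hu, Hv. destruct Hu as [U1 U2], Hv as [V1 V2].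
  apply Ccv_iff. split; simpl.
  - apply (is_lim_seq_plus' _ _ _ _ U1 V1).
  - apply (is_lim_seq_plus' _ _ _ _ U2 V2).
Qed.

Lemma Ccv_mult u v a b : Ccv u a -> Ccv v b -> Ccv (fun n => Cmult (u n) (v n)) (Cmult a b).
Proof.
  intros Hu Hv. apply Ccv_iff in Hu, Hv. destruct Hu as [U1 U2], Hv as [V1 V2].
  apply Ccv_iff. split; simpl.
  - apply is_lim_seq_minus'; apply is_lim_seq_mult'; auto.
  - apply is_lim_seq_plus'; apply is_lim_seq_mult'; auto.
Qed.

Lemma Ccv_incr_n u l N : Ccv (fun n => u (n + N)%nat) l -> Ccv u l.
Proof.
  intros H. apply Ccv_iff in H. destruct H as [H1 H2]. apply Ccv_iff. split.
  - apply (is_lim_seq_incr_n _ N). exact H1.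
  - apply (is_lim_seq_incr_n _ N). exact H2.
Qed.

Lemma Ccv_Cmod_le0 u (e : nat -> R) : (forall n, Cmod (u n) <= e n) -> is_lim_seq e 0 -> Ccv u (RtoC 0).
Proof.
  intros Hb He. apply Ccv_iff. change (Re (RtoC 0)) with 0. change (Im (RtoC 0)) with 0.
  assert (He' : is_lim_seq (fun n => - e n) 0).
  { generalize (proj1 (is_lim_seq_opp e 0) He). simpl. rewrite Ropp_0. auto. }
  split.
  - apply is_lim_seq_le_le with (fun n => - e n) e; [ | exact He' | exact He].
    intros n. generalize (re_le_Cmod (u n)) (Hb n). intros X Y. apply Rabs_le_between. lra.
  - apply is_lim_seq_le_le with (fun n => - e n) e; [ | exact He' | exact He].
    intros n. generalize (im_le_Cmod (u n)) (Hb n). intros X Y. apply Rabs_le_between. lra.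
Qed.

Lemma cSeries_eq a S : Cser a S -> cSeries a = S.
Proof. intros H. apply cLim_eq. exact H. Qed.

Lemma Cser_ex (a : nat -> C) (M : nat -> R) : (forall k, Cmod (a k) <= M k) -> ex_series M ->
  Cser a (Series (fun k => Re (a k)), Series (fun k => Im (a k))).
Proof.
  intros Hb HM. unfold Cser. apply Ccv_iff. split; simpl.
  - eapply is_lim_seq_ext. intros n; symmetry; apply Re_sum_n.
    apply Series_correct. apply (@ex_series_le R_AbsRing R_CompleteNormedModule _ M); auto.
    intros k. unfold norm; simpl; unfold abs; simpl. eapply Rle_trans. apply re_le_Cmod. apply Hb.
  - eapply is_lim_seq_ext. intros n; symmetry; apply Im_sum_n.
    apply Series_correct. apply (@ex_series_le R_AbsRing R_CompleteNormedModule _ M); auto.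
    intros k. unfold norm; simpl; unfold abs; simpl. eapply Rle_trans. apply im_le_Cmod. apply Hb.
Qed.

Lemma Cser_Re a S : Cser a S -> Series (fun k => Re (a k)) = Re S.
Proof.
  intros H. apply Ccv_iff in H. destruct H as [H _]. unfold Series.
  rewrite (Lim_seq_ext _ _ (fun n => eq_sym (Re_sum_n a n))).
  rewrite (is_lim_seq_unique _ _ H). reflexivity.
Qed.

Lemma Cser_Im a S : Cser a S -> Series (fun k => Im (a k)) = Im S.
Proof.
  intros H. apply Ccv_iff in H. destruct H as [_ H]. unfold Series.
  rewrite (Lim_seq_ext _ _ (fun n => eq_sym (Im_sum_n a n))).
  rewrite (is_lim_seq_unique _ _ H). reflexivity.
Qed.

Lemma sum_n_Cmult_l (c : C) (a : nat -> C) N : sum_n (fun k => Cmult c (a k)) N = Cmult c (sum_n a N).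
Proof.
  induction N.
  - rewrite !sum_O. reflexivity.
  - rewrite !sum_Sn, IHN. unfold plus; simpl. ring.
Qed.

Lemma Cser_scal c a S : Cser a S -> Cser (fun k => Cmult c (a k)) (Cmult c S).
Proof.
  intros H. unfold Cser. eapply Ccv_ext. intros n; symmetry; apply sum_n_Cmult_l.
  apply Ccv_mult. apply Ccv_const. exact H.
Qed.

Lemma tannery_C (f : nat -> nat -> C) (g : nat -> C) (M : nat -> R) (S : nat -> C) (G : C) :
  (forall k, Ccv (fun n => f n k) (g k)) ->
  (forall n k, Cmod (f n k) <= M k) -> ex_series M ->
  (forall n, Cser (f n) (S n)) -> Cser g G -> Ccv S G.
Proof.
  intros Hl Hb HM HS HG. apply Ccv_iff. split.
  - eapply is_lim_seq_ext. intros n. apply (Cser_Re _ _ (HS n)).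
    rewrite <- (Cser_Re _ _ HG). apply tannery_R with M; auto.
    intros k. apply Ccv_iff, Hl.
    intros n k. eapply Rle_trans. apply re_le_Cmod. apply Hb.
  - eapply is_lim_seq_ext. intros n. apply (Cser_Im _ _ (HS n)).
    rewrite <- (Cser_Im _ _ HG). apply tannery_R with M; auto.
    intros k. apply Ccv_iff, Hl.
    intros n k. eapply Rle_trans. apply im_le_Cmod. apply Hb.
Qed.

Lemma Cmod_le_sum (z : C) : Cmod z <= Rabs (Re z) + Rabs (Im z).
Proof.
  destruct z as [x y]. unfold Cmod, Re, Im; simpl.
  rewrite <- (sqrt_Rsqr (Rabs x + Rabs y)).
  apply sqrt_le_1_alt. unfold Rsqr. 
  assert (Ex : x * x = Rabs x * Rabs x) by (rewrite <- Rabs_mult; rewrite Rabs_right; nra).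
  assert (Ey : y * y = Rabs y * Rabs y) by (rewrite <- Rabs_mult; rewrite Rabs_right; nra).
  generalize (Rabs_pos x) (Rabs_pos y). intros. simpl. rewrite !Rmult_1_r. nra.
  generalize (Rabs_pos x) (Rabs_pos y). lra.
Qed.

Lemma Cmod_triang_inv (a b : C) : Cmod a - Cmod b <= Cmod (Cminus a b).
Proof.
  generalize (Cmod_triangle (Cminus a b) b). replace (Cplus (Cminus a b) b) with a by ring. lra.
Qed.

Lemma Ccv_Cmod u l : Ccv u l -> is_lim_seq (fun n => Cmod (u n)) (Cmod l).
Proof.
  intros H. apply Ccv_iff in H. destruct H as [H1 H2].
  set (e := fun n => Rabs (Re (u n) - Re l) + Rabs (Im (u n) - Im l)).
  assert (He : is_lim_seq e 0).
  { replace (Finite 0) with (Finite (Rabs 0 + Rabs 0)) by (rewrite Rabs_R0; f_equal; ring).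
    apply is_lim_seq_plus'.
    - apply (is_lim_seq_abs _ (Finite 0)). replace (Finite 0) with (Finite (Re l - Re l)) by (f_equal; ring).
      apply is_lim_seq_minus'. auto. apply is_lim_seq_const.
    - apply (is_lim_seq_abs _ (Finite 0)). replace (Finite 0) with (Finite (Im l - Im l)) by (f_equal; ring).
      apply is_lim_seq_minus'. auto. apply is_lim_seq_const. }
  assert (Hb : forall n, Cmod (Cminus (u n) l) <= e n).
  { intros n. eapply Rle_trans. apply Cmod_le_sum. unfold e, Re, Im. simpl. unfold Rminus. lra. }
  apply is_lim_seq_le_le with (fun n => Cmod l - e n) (fun n => Cmod l + e n).
  - intros n. split.
    + generalize (Cmod_triang_inv l (u n)) (Hb n). rewrite <- (Cmod_opp (Cminus (u n) l)).
      replace (Copp (Cminus (u n) l)) with (Cminus l (u n)) by ring. lra.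
    + generalize (Cmod_triang_inv (u n) l) (Hb n). lra.
  - replace (Finite (Cmod l)) with (Finite (Cmod l - 0)) by (f_equal; ring).
    apply is_lim_seq_minus'. apply is_lim_seq_const. auto.
  - replace (Finite (Cmod l)) with (Finite (Cmod l + 0)) by (f_equal; ring).
    apply is_lim_seq_plus'. apply is_lim_seq_const. auto.
Qed.

Lemma Ccv_shift u l N : Ccv u l -> Ccv (fun n => u (n + N)%nat) l.
Proof.
  intros H. apply Ccv_iff in H. destruct H as [H1 H2]. apply Ccv_iff. split.
  - apply (is_lim_seq_incr_n (fun n => Re (u n)) N). exact H1.
  - apply (is_lim_seq_incr_n (fun n => Im (u n)) N). exact H2.
Qed.

Lemma pow_le1' x k : 0 <= x <= 1 -> x ^ k <= 1.
Proof.
  intros H. induction k. simpl; lra. simpl.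
  generalize (pow_le x k (proj1 H)). nra.
Qed.

Section QPOCH.
Variable q : R.
Hypothesis Hq : 0 < q < 1.

Lemma qpoch_split a k m :
  qpoch a q (k + m) = Cmult (qpoch a q k) (qpoch (Cmult a (RtoC (q ^ k))) q m).
Proof.
  induction m.
  - rewrite Nat.add_0_r. simpl. ring.
  - rewrite Nat.add_succ_r. simpl. rewrite IHm. rewrite pow_add, RtoC_mult. ring.
Qed.

Lemma qpoch_S_left a m : qpoch a q (S m) = Cmult (Cminus (RtoC 1) a) (qpoch (Cmult a (RtoC q)) q m).
Proof.
  change (S m) with (1 + m)%nat. rewrite qpoch_split. simpl. rewrite Rmult_1_r. ring.
Qed.

Lemma qpoch_bound_aux a k : Cmod (qpoch a q k) <= exp (Cmod a * ((1 - q ^ k) / (1 - q))).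
Proof.
  induction k.
  - simpl. rewrite Cmod_1. replace (Cmod a * ((1 - 1) / (1 - q))) with 0 by (field; lra).
    rewrite exp_0. lra.
  - simpl qpoch. rewrite Cmod_mult.
    replace (Cmod a * ((1 - q ^ S k) / (1 - q))) with
      (Cmod a * ((1 - q ^ k) / (1 - q)) + Cmod a * q ^ k) by (simpl; field; lra).
    rewrite exp_plus. apply Rmult_le_compat; try apply Cmod_ge_0; auto.
    eapply Rle_trans. apply Cmod_triangle. rewrite Cmod_opp, Cmod_1, Cmod_mult, Cmod_R.
    rewrite Rabs_right. 2: apply Rle_ge, pow_le; lra.
    generalize (exp_ineq1_le (Cmod a * q ^ k)). lra.
Qed.



Lemma exp_le' x y : x <= y -> exp x <= exp y.
Proof. intros H. destruct (Req_dec x y). subst; lra. left; apply exp_increasing; lra. Qed.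

Lemma qpoch_bound a k : Cmod (qpoch a q k) <= exp (Cmod a / (1 - q)).
Proof.
  eapply Rle_trans. apply qpoch_bound_aux. apply exp_le'.
  unfold Rdiv. rewrite <- Rmult_assoc. apply Rmult_le_compat_r.
  left; apply Rinv_0_lt_compat; lra.
  generalize (Cmod_ge_0 a) (pow_le q k ltac:(lra)). nra.
Qed.

Lemma qpoch_lower_aux a k : Cmod a < 1 -> 1 - Cmod a * ((1 - q ^ k) / (1 - q)) <= Cmod (qpoch a q k).
Proof.
  intros Ha. induction k.
  - simpl. rewrite Cmod_1. replace (Cmod a * ((1 - 1) / (1 - q))) with 0 by (field; lra). lra.
  - simpl qpoch. rewrite Cmod_mult.
    assert (Hqk : 0 < q ^ k <= 1). { split. apply pow_lt; lra. apply pow_le1'; lra. }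
    assert (H1 : 1 - Cmod a * q ^ k <= Cmod (Cminus (RtoC 1) (Cmult a (RtoC (q ^ k))))).
    { generalize (Cmod_triang_inv (RtoC 1) (Cmult a (RtoC (q ^ k)))).
      rewrite Cmod_1, Cmod_mult, Cmod_R, Rabs_right by lra. lra. }
    assert (H2 : 0 < 1 - Cmod a * q ^ k). { generalize (Cmod_ge_0 a). nra. }
    replace (1 - Cmod a * ((1 - q ^ S k) / (1 - q))) with
      (1 - Cmod a * ((1 - q ^ k) / (1 - q)) - Cmod a * q ^ k) by (simpl; field; lra).
    set (s := Cmod a * ((1 - q ^ k) / (1 - q))) in *.
    assert (Hs : 0 <= s).
    { unfold s. apply Rmult_le_pos. apply Cmod_ge_0. apply Rdiv_le_0_compat; lra. }
    generalize (Cmod_ge_0 (qpoch a q k)). intros Hp.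
    destruct (Rle_dec (1 - s) 0).
    + assert (0 <= Cmod a * q ^ k) by (apply Rmult_le_pos; [apply Cmod_ge_0| lra]).
      assert (0 <= Cmod (qpoch a q k) * Cmod (Cminus (RtoC 1) (Cmult a (RtoC (q ^ k))))).
      { apply Rmult_le_pos; auto. apply Cmod_ge_0. }
      lra.
    + assert (0 <= Cmod a * q ^ k) by (apply Rmult_le_pos; [apply Cmod_ge_0| lra]).
      apply Rle_trans with ((1 - s) * (1 - Cmod a * q ^ k)).
      * nra.
      * apply Rmult_le_compat; lra.
Qed.

Lemma qpoch_lower a k : Cmod a < 1 - q -> 1 - Cmod a / (1 - q) <= Cmod (qpoch a q k).
Proof.
  intros Ha. eapply Rle_trans. 2: apply qpoch_lower_aux; lra.
  unfold Rdiv. rewrite <- Rmult_assoc.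
  assert (0 < / (1 - q)) by (apply Rinv_0_lt_compat; lra).
  assert (0 <= Cmod a * q ^ k * / (1 - q)).
  { apply Rmult_le_pos; [apply Rmult_le_pos; [apply Cmod_ge_0 | apply pow_le; lra] | lra]. }
  replace (1 - Cmod a * (1 - q ^ k) * / (1 - q)) with (1 - Cmod a * / (1 - q) + Cmod a * q ^ k * / (1 - q)) by ring.
  lra.
Qed.

Lemma telescope (u : nat -> C) N :
  sum_n (fun j => Cminus (u (S j)) (u j)) N = Cminus (u (S N)) (u O).
Proof.
  induction N.
  - rewrite sum_O. reflexivity.
  - rewrite sum_Sn, IHN. unfold plus; simpl. ring.
Qed.

Lemma qpoch_cv a : Ccv (fun k => qpoch a q k) (qpoch_inf a q).
Proof.
  set (B := exp (Cmod a / (1 - q))).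
  set (d := fun j => Cminus (qpoch a q (S j)) (qpoch a q j)).
  assert (Hd : forall j, Cmod (d j) <= B * Cmod a * q ^ j).
  { intros j. unfold d. simpl qpoch.
    replace (Cminus (Cmult (qpoch a q j) (Cminus (RtoC 1) (Cmult a (RtoC (q ^ j))))) (qpoch a q j))
      with (Copp (Cmult (qpoch a q j) (Cmult a (RtoC (q ^ j))))) by ring.
    rewrite Cmod_opp, !Cmod_mult, Cmod_R, Rabs_right by (apply Rle_ge, pow_le; lra).
    rewrite Rmult_assoc. apply Rmult_le_compat_r.
    apply Rmult_le_pos. apply Cmod_ge_0. apply pow_le; lra. apply qpoch_bound. }
  assert (HM : ex_series (fun j => B * Cmod a * q ^ j)).
  { apply (@ex_series_scal_l R_AbsRing R_NormedModule (B * Cmod a) (fun j => q ^ j)).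
    apply ex_series_geom. rewrite Rabs_right; lra. }
  set (DD := (Series (fun k => Re (d k)), Series (fun k => Im (d k)))).
  assert (H1 : Ccv (fun N => qpoch a q (S N)) (Cplus (RtoC 1) DD)).
  { eapply Ccv_ext. 2: apply Ccv_plus; [apply Ccv_const | exact (Cser_ex d _ Hd HM)].
    intros N. simpl. unfold d. rewrite telescope. simpl. ring. }
  assert (H2 : Ccv (fun k => qpoch a q k) (Cplus (RtoC 1) DD)).
  { apply Ccv_incr_n with 1%nat. eapply Ccv_ext. 2: exact H1. intros n. rewrite Nat.add_1_r. reflexivity. }
  unfold qpoch_inf. rewrite (cLim_eq _ _ H2). exact H2.
Qed.

End QPOCH.

Section PINF.
Variable q : R.
Hypothesis Hq : 0 < q < 1.

Lemma Pinf_split a k : qpoch_inf a q = Cmult (qpoch a q k) (qpoch_inf (Cmult a (RtoC (q ^ k))) q).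
Proof.
  apply (Ccv_unique (fun m => qpoch a q (m + k))).
  - apply Ccv_shift. apply qpoch_cv; auto.
  - eapply Ccv_ext. intros m. rewrite Nat.add_comm. symmetry. apply qpoch_split.
    apply Ccv_mult. apply Ccv_const. apply qpoch_cv; auto.
Qed.

Lemma Pinf_bound a : Cmod (qpoch_inf a q) <= exp (Cmod a / (1 - q)).
Proof.
  assert (X := is_lim_seq_le _ _ _ _ (fun k => qpoch_bound q Hq a k) (Ccv_Cmod _ _ (qpoch_cv q Hq a))
    (is_lim_seq_const _)). exact X.
Qed.

Lemma Pinf_lower a : Cmod a < 1 - q -> 1 - Cmod a / (1 - q) <= Cmod (qpoch_inf a q).
Proof.
  intros Ha.
  assert (X := is_lim_seq_le _ _ _ _ (fun k => qpoch_lower q Hq a k Ha) (is_lim_seq_const _)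
    (Ccv_Cmod _ _ (qpoch_cv q Hq a))). exact X.
Qed.

Lemma Cmult_neq0 (x y : C) : x <> RtoC 0 -> y <> RtoC 0 -> Cmult x y <> RtoC 0.
Proof.
  intros Hx Hy H. apply (f_equal Cmod) in H. rewrite Cmod_mult, Cmod_0 in H.
  apply Rmult_integral in H. destruct H as [H|H]; apply Cmod_eq_0 in H; auto.
Qed.

Lemma qpoch_neq0 a k : (forall j, Cminus (RtoC 1) (Cmult a (RtoC (q ^ j))) <> RtoC 0) -> qpoch a q k <> RtoC 0.
Proof.
  intros H. induction k.
  - simpl. intros E. apply (f_equal Re) in E. unfold Re in E; simpl in E. lra.
  - simpl. apply Cmult_neq0; auto.
Qed.

Lemma Pinf_neq0 a : (forall j, Cminus (RtoC 1) (Cmult a (RtoC (q ^ j))) <> RtoC 0) -> qpoch_inf a q <> RtoC 0.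
Proof.
  intros H.
  assert (HJ : exists J, Cmod a * q ^ J < (1 - q) / 2).
  { assert (L := is_lim_seq_geom q ltac:(rewrite Rabs_right; lra)).
    assert (L2 := is_lim_seq_scal_l _ (Cmod a) _ L). simpl in L2. rewrite Rmult_0_r in L2.
    assert (Hp : 0 < (1 - q) / 2) by lra.
    destruct (proj2 (is_lim_seq_spec _ _) L2 (mkposreal _ Hp)) as [N HN].
    exists N. specialize (HN N (le_n _)). simpl in HN. rewrite Rminus_0_r in HN.
    apply Rabs_lt_between in HN. lra. }
  destruct HJ as [J HJ].
  rewrite (Pinf_split a J). apply Cmult_neq0. apply qpoch_neq0; auto.
  intros E. assert (Hc : Cmod (Cmult a (RtoC (q ^ J))) < 1 - q).
  { rewrite Cmod_mult, Cmod_R, Rabs_right. lra. apply Rle_ge, pow_le; lra. }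
  generalize (Pinf_lower _ Hc). rewrite E, Cmod_0. rewrite Cmod_mult, Cmod_R, Rabs_right.
  2: apply Rle_ge, pow_le; lra.
  intros X. assert (Cmod a * q ^ J / (1 - q) < 1/2).
  { apply Rmult_lt_reg_r with (1 - q). lra. unfold Rdiv. rewrite Rmult_assoc, Rinv_l by lra. lra. }
  lra.
Qed.
End PINF.

Fixpoint rq (q : R) (k : nat) : R :=
  match k with O => 1 | S k' => rq q k' * (1 - q * q ^ k') end.

Section EULER.
Variable q r : R.
Hypothesis Hq : 0 < q < 1.
Hypothesis Hr : 0 < r.
Hypothesis Hrq : r * r = q.

Lemma qpoch_q k : qpoch (RtoC q) q k = RtoC (rq q k).
Proof.
  induction k. reflexivity. simpl qpoch. simpl rq. rewrite IHk.
  rewrite RtoC_mult, RtoC_minus, RtoC_mult. reflexivity.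
Qed.

Lemma rq_pos k : 0 < rq q k.
Proof.
  induction k. simpl; lra. simpl. apply Rmult_lt_0_compat; auto.
  assert (q * q ^ k < 1). { generalize (pow_le1' q k ltac:(lra)) (pow_le q k ltac:(lra)). nra. } lra.
Qed.

Lemma r_tri_S k : r ^ (S k * (S k - 1)) = r ^ (k * (k - 1)) * q ^ k.
Proof.
  replace (S k * (S k - 1))%nat with (k * (k - 1) + 2 * k)%nat.
  rewrite pow_add, (pow_mult r 2 k). replace (r ^ 2) with q by (simpl; rewrite Rmult_1_r; auto). reflexivity.
  destruct k; simpl; try lia.
Qed.

Definition ecoef k := r ^ (k * (k - 1)) / rq q k.
Definition eterm (z : C) k := Cmult (RtoC (ecoef k)) (Cpow z k).

Lemma ecoef_pos k : 0 < ecoef k.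
Proof. unfold ecoef. apply Rdiv_lt_0_compat. apply pow_lt; lra. apply rq_pos. Qed.

Lemma ecoef_S k : ecoef (S k) = ecoef k * (q ^ k / (1 - q * q ^ k)).
Proof.
  unfold ecoef. rewrite r_tri_S. simpl rq.
  assert (q * q ^ k < 1). { generalize (pow_le1' q k ltac:(lra)) (pow_le q k ltac:(lra)). nra. }
  generalize (rq_pos k). intros. field. lra.
Qed.

Lemma ex_emaj rho : 0 < rho -> ex_series (fun k => ecoef k * rho ^ k).
Proof.
  intros Hrho.
  eapply ex_series_ext. 2: apply (ex_series_DAlembert (fun k => ecoef k * rho ^ k) 0).
  - intros k. simpl. apply Rabs_right. apply Rle_ge, Rmult_le_pos. left; apply ecoef_pos. apply pow_le; lra.
  - lra.
  - intros k. apply Rgt_not_eq, Rmult_lt_0_compat. apply ecoef_pos. apply pow_lt; lra.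
  - apply is_lim_seq_ext with (fun k => Rabs (rho * q ^ k / (1 - q * q ^ k))).
    + intros k. f_equal. rewrite ecoef_S. simpl.
      assert (q * q ^ k < 1). { generalize (pow_le1' q k ltac:(lra)) (pow_le q k ltac:(lra)). nra. }
      assert (0 < q ^ k) by (apply pow_lt; lra).
      generalize (ecoef_pos k) (pow_lt rho k Hrho). intros.
      field; repeat split; lra.
    + replace (Finite 0) with (Rbar_abs (Finite (rho * 0 / (1 - q * 0)))) by (simpl; f_equal; rewrite Rmult_0_r, Rdiv_0_l, Rabs_R0; auto).
      apply is_lim_seq_abs. apply is_lim_seq_div'.
      apply is_lim_seq_scal_l with (lu := Finite 0). apply is_lim_seq_geom. rewrite Rabs_right; lra.
      apply is_lim_seq_minus'. apply is_lim_seq_const. apply is_lim_seq_scal_l with (lu := Finite 0).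
      apply is_lim_seq_geom. rewrite Rabs_right; lra. lra.
Qed.

Lemma eterm_bound z k : Cmod (eterm z k) <= ecoef k * (Cmod z + 1) ^ k.
Proof.
  unfold eterm. rewrite Cmod_mult, Cmod_R, Cmod_pow, Rabs_right.
  2: left; apply ecoef_pos.
  apply Rmult_le_compat_l. left; apply ecoef_pos.
  apply pow_incr. split. apply Cmod_ge_0. lra.
Qed.

Definition Gf z := cSeries (eterm z).

Lemma G_ser z : Cser (eterm z) (Gf z).
Proof.
  assert (Hp : 0 < Cmod z + 1) by (generalize (Cmod_ge_0 z); lra).
  assert (H := Cser_ex (eterm z) _ (eterm_bound z) (ex_emaj _ Hp)).
  unfold Gf. rewrite (cSeries_eq _ _ H). exact H.
Qed.

Lemma eterm_diff z j :
  Cminus (eterm z (S j)) (eterm (Cmult (RtoC q) z) (S j)) = Cmult z (eterm (Cmult (RtoC q) z) j).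
Proof.
  unfold eterm. rewrite !Cpow_mult_l, <- !RtoC_pow.
  assert (E : ecoef (S j) * (1 - q * q ^ j) = ecoef j * q ^ j).
  { rewrite ecoef_S. assert (q * q ^ j < 1). { generalize (pow_le1' q j ltac:(lra)) (pow_le q j ltac:(lra)). nra. }
    field. lra. }
  simpl Cpow. simpl pow.
  transitivity (Cmult (RtoC (ecoef (S j) * (1 - q * q ^ j))) (Cmult z (Cpow z j))).
  rewrite !RtoC_mult, !RtoC_minus, !RtoC_mult. ring.
  rewrite E, RtoC_mult. ring.
Qed.

Lemma sum_n_Cplus (a b : nat -> C) N : sum_n (fun k => Cplus (a k) (b k)) N = Cplus (sum_n a N) (sum_n b N).
Proof. induction N. rewrite !sum_O; reflexivity. rewrite !sum_Sn, IHN. unfold plus; simpl. ring. Qed.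

Lemma Cser_plus a b A B : Cser a A -> Cser b B -> Cser (fun k => Cplus (a k) (b k)) (Cplus A B).
Proof.
  intros Ha Hb. unfold Cser. eapply Ccv_ext. intros n; symmetry; apply sum_n_Cplus.
  apply Ccv_plus; auto.
Qed.

Lemma Cser_minus a b A B : Cser a A -> Cser b B -> Cser (fun k => Cminus (a k) (b k)) (Cminus A B).
Proof.
  intros Ha Hb. assert (Hb' := Cser_scal (Copp (RtoC 1)) _ _ Hb).
  assert (H := Cser_plus _ _ _ _ Ha Hb').
  unfold Cser in *. eapply Ccv_ext. 2: replace (Cminus A B) with (Cplus A (Cmult (Copp (RtoC 1)) B)). 2: exact H.
  intros n. apply sum_n_ext. intros k. change (Cplus (a k) (Cmult (Copp (RtoC 1)) (b k)) = Cminus (a k) (b k)). ring.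
  ring.
Qed.

Definition shift0 (b : nat -> C) k := match k with O => RtoC 0 | S j => b j end.

Lemma Cser_shift b SS : Cser b SS -> Cser (shift0 b) SS.
Proof.
  intros H. unfold Cser in *. apply Ccv_incr_n with 1%nat.
  eapply Ccv_ext. 2: exact H. intros N. rewrite Nat.add_1_r.
  induction N.
  - rewrite sum_Sn, !sum_O. unfold plus; simpl. ring.
  - rewrite sum_Sn, IHN, (sum_Sn _ (S N)). reflexivity.
Qed.

Lemma G_fe z : Gf z = Cmult (Cplus (RtoC 1) z) (Gf (Cmult (RtoC q) z)).
Proof.
  assert (H1 := Cser_minus _ _ _ _ (G_ser z) (G_ser (Cmult (RtoC q) z))).
  assert (H2 := Cser_shift _ _ (Cser_scal z _ _ (G_ser (Cmult (RtoC q) z)))).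
  assert (E : Cminus (Gf z) (Gf (Cmult (RtoC q) z)) = Cmult z (Gf (Cmult (RtoC q) z))).
  { apply (Ccv_unique _ _ _ H1). unfold Cser in *. eapply Ccv_ext. 2: exact H2.
    intros N. apply sum_n_ext. intros k. destruct k.
    - unfold shift0, eterm. simpl. ring.
    - unfold shift0. rewrite eterm_diff. reflexivity. }
  transitivity (Cplus (Cminus (Gf z) (Gf (Cmult (RtoC q) z))) (Gf (Cmult (RtoC q) z))). ring.
  rewrite E. ring.
Qed.

Lemma G_iter z N : Gf z = Cmult (qpoch (Copp z) q N) (Gf (Cmult (RtoC (q ^ N)) z)).
Proof.
  induction N.
  - simpl. replace (Cmult (RtoC 1) z) with z by ring. ring.
  - rewrite IHN. rewrite (G_fe (Cmult (RtoC (q ^ N)) z)). simpl qpoch.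
    replace (Cmult (RtoC q) (Cmult (RtoC (q ^ N)) z)) with (Cmult (RtoC (q ^ S N)) z).
    ring. simpl. rewrite RtoC_mult. ring.
Qed.

Lemma G_lim z : Ccv (fun N => Gf (Cmult (RtoC (q ^ N)) z)) (RtoC 1).
Proof.
  apply tannery_C with (f := fun N k => eterm (Cmult (RtoC (q ^ N)) z) k)
    (g := fun k => match k with O => RtoC 1 | S _ => RtoC 0 end)
    (M := fun k => ecoef k * (Cmod z + 1) ^ k).
  - intros k. destruct k.
    + eapply Ccv_ext. 2: apply Ccv_const. intros n. unfold eterm, ecoef. simpl. ring_simplify.
      apply injective_projections; simpl; field.
    + apply Ccv_Cmod_le0 with (fun n => ecoef (S k) * Cmod z ^ S k * (q ^ S k) ^ n).
      * intros n. unfold eterm. rewrite Cmod_mult, Cmod_R, Cmod_pow, Cmod_mult, Cmod_R.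
        rewrite !Rabs_right. rewrite Rpow_mult_distr, <- pow_mult, <- pow_mult, Nat.mul_comm. lra.
        apply Rle_ge, pow_le; lra. left; apply ecoef_pos.
      * replace (Finite 0) with (Finite (ecoef (S k) * Cmod z ^ S k * 0)) by (f_equal; ring).
        apply is_lim_seq_scal_l with (lu := Finite 0). apply is_lim_seq_geom.
        rewrite Rabs_right. simpl. generalize (pow_le1' q k ltac:(lra)) (pow_le q k ltac:(lra)). nra.
        apply Rle_ge, pow_le; lra.
  - intros n k. eapply Rle_trans. apply eterm_bound. apply Rmult_le_compat_l. left; apply ecoef_pos.
    apply pow_incr. split. generalize (Cmod_ge_0 (Cmult (RtoC (q ^ n)) z)); lra.
    rewrite Cmod_mult, Cmod_R, Rabs_right. 2: apply Rle_ge, pow_le; lra.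
    generalize (pow_le1' q n ltac:(lra)) (Cmod_ge_0 z). nra.
  - apply ex_emaj. generalize (Cmod_ge_0 z); lra.
  - intros n. apply G_ser.
  - unfold Cser. eapply Ccv_ext. 2: apply Ccv_const. intros N. induction N.
    + rewrite sum_O. reflexivity.
    + rewrite sum_Sn, <- IHN. unfold plus; simpl. ring.
Qed.

Theorem euler z : Gf z = qpoch_inf (Copp z) q.
Proof.
  apply (Ccv_unique (fun N => Cmult (qpoch (Copp z) q N) (Gf (Cmult (RtoC (q ^ N)) z)))).
  - eapply Ccv_ext. intros N. apply G_iter. apply Ccv_const.
  - replace (qpoch_inf (Copp z) q) with (Cmult (qpoch_inf (Copp z) q) (RtoC 1)) by ring.
    apply Ccv_mult. apply qpoch_cv; auto. apply G_lim.
Qed.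

Lemma euler_ser z : Cser (eterm z) (qpoch_inf (Copp z) q).
Proof. rewrite <- euler. apply G_ser. Qed.
End EULER.

Ltac cnz := let H := fresh in intros H; apply (f_equal Re) in H; unfold Re in H; simpl in H; lra.

Definition sgn (n : nat) : C := RtoC ((-1) ^ n).

Lemma sgn_add n k : sgn (n + k) = Cmult (sgn n) (sgn k).
Proof. unfold sgn. rewrite pow_add, RtoC_mult. reflexivity. Qed.

Lemma sgn_sq n : Cmult (sgn n) (sgn n) = RtoC 1.
Proof.
  unfold sgn. rewrite <- RtoC_mult, <- Rpow_mult_distr.
  replace (-1 * -1) with 1 by ring. rewrite pow1. reflexivity.
Qed.

Lemma sgn_neq0 n : sgn n <> RtoC 0.
Proof.
  intros H. assert (X := f_equal (fun z => Cmult z (sgn n)) H). simpl in X.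
  rewrite sgn_sq in X. apply (f_equal Re) in X. unfold Re in X; simpl in X. lra.
Qed.

Lemma Cpow_opp (x : C) k : Cpow (Copp x) k = Cmult (sgn k) (Cpow x k).
Proof.
  induction k.
  - unfold sgn. simpl. ring.
  - simpl Cpow. rewrite IHk. unfold sgn. simpl pow. rewrite RtoC_mult.
    replace (RtoC (-1)) with (Copp (RtoC 1)) by (apply injective_projections; simpl; lra). ring.
Qed.

Lemma sgn_double n : sgn (n + n) = RtoC 1.
Proof. rewrite sgn_add. apply sgn_sq. Qed.

Lemma INR_tri k : INR (k * (k - 1)) = INR k * (INR k - 1).
Proof.
  destruct k. simpl. ring.
  rewrite mult_INR. replace (S k - 1)%nat with k by lia. rewrite S_INR. ring.
Qed.

Section MAIN.
Variables (q : R) (sigma w : C).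
Hypothesis Hq : 0 < q < 1.
Hypothesis Hw : w <> RtoC 0.
Hypothesis Hs : forall m : Z, qpow q sigma <> RtoC (powerRZ q m).

Local Notation Q := (qpow q).
Let Hq0 : 0 < q. Proof. lra. Qed.

Definition nu n := Cminus (Copp sigma) (RtoC (INR n)).
Definition bb n := Q (Cplus (nu n) (RtoC 1)).
Definition ZZ n := Cmult (Copp (Q (Cplus (nu n) (RtoC (3/2)))))
                         (Cdiv (Cmult (Cmult (RtoC 2) w) (Cmult (RtoC 2) w)) (RtoC 4)).
Definition aa n k := Cmult (Cdiv (RtoC (q ^ (k * (k - 1))))
                                 (Cmult (qpoch (RtoC q) q k) (qpoch (bb n) q k)))
                           (Cpow (ZZ n) k).
Definition AA n := Cdiv (Cmult (nu n) (Cplus (nu n) (RtoC 1))) (RtoC 4).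
Definition cn n := Cmult (Cmult (sgn n) (Q (Cmult (RtoC 2) (AA n)))) (qpoch_inf (bb n) q).
Definition ff n k := Cmult (cn n) (aa n k).
Definition FF n k := Cplus (Cplus (Cmult (RtoC 2) (AA n)) (RtoC (INR k * (INR k - 1))))
                           (Cmult (RtoC (INR k)) (Cplus (nu n) (RtoC (3/2)))).

Lemma phi01_aa n : phi01 (bb n) q (ZZ n) = cSeries (aa n).
Proof. reflexivity. Qed.

Lemma Q_neg_pos s : Cmult (Q (Copp s)) (Q s) = RtoC 1.
Proof. rewrite <- qpow_plus. replace (Cplus (Copp s) s) with (RtoC 0) by ring. apply qpow_0; auto. Qed.

Lemma bb_qk n k : Cmult (bb n) (RtoC (q ^ k)) = Q (Cplus (Cplus (nu n) (RtoC 1)) (RtoC (INR k))).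
Proof. unfold bb. rewrite (qpow_plus q (Cplus (nu n) (RtoC 1)) (RtoC (INR k))), (qpow_nat q Hq0 k). reflexivity. Qed.

Lemma bb_nonvanish n j : Cminus (RtoC 1) (Cmult (bb n) (RtoC (q ^ j))) <> RtoC 0.
Proof.
  rewrite bb_qk. intros H.
  set (m := (1 + Z.of_nat j - Z.of_nat n)%Z).
  assert (E : Cplus (Cplus (nu n) (RtoC 1)) (RtoC (INR j)) = Cplus (Copp sigma) (RtoC (IZR m))).
  { unfold nu, m. rewrite minus_IZR, plus_IZR, <- !INR_IZR_INZ.
    rewrite !RtoC_minus, !RtoC_plus. ring. }
  rewrite E, qpow_plus in H.
  apply (Hs m). rewrite <- qpow_Z; auto.
  transitivity (Cmult (Q sigma) (Cmult (Q (Copp sigma)) (Q (RtoC (IZR m))))).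
  - assert (H' : Cmult (Q (Copp sigma)) (Q (RtoC (IZR m))) = RtoC 1).
    { transitivity (Cminus (RtoC 1) (Cminus (RtoC 1) (Cmult (Q (Copp sigma)) (Q (RtoC (IZR m)))))). ring.
      rewrite H. ring. }
    rewrite H'. ring.
  - rewrite Cmult_assoc, (Cmult_comm (Q sigma)), Q_neg_pos. ring.
Qed.

Lemma Pb_neq0 n : qpoch_inf (bb n) q <> RtoC 0.
Proof. apply Pinf_neq0; auto. apply bb_nonvanish. Qed.

Lemma Pkb_neq0 n k : qpoch (bb n) q k <> RtoC 0.
Proof. apply qpoch_neq0. apply bb_nonvanish. Qed.

Lemma Pkq_neq0 k : qpoch (RtoC q) q k <> RtoC 0.
Proof.
  rewrite (qpoch_q q). intros H. apply (f_equal Re) in H. unfold Re in H; simpl in H.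
  generalize (rq_pos q Hq k). lra.
Qed.

Lemma Pq_neq0 : qpoch_inf (RtoC q) q <> RtoC 0.
Proof.
  apply Pinf_neq0; auto. intros j H. apply (f_equal Re) in H. unfold Re in H; simpl in H.
  generalize (pow_le1' q j ltac:(lra)) (pow_le q j ltac:(lra)). nra.
Qed.

Lemma cn_neq0 n : cn n <> RtoC 0.
Proof.
  unfold cn. apply Cmult_neq0. apply Cmult_neq0. apply sgn_neq0. apply qpow_neq0. apply Pb_neq0.
Qed.

Lemma ZZ_pow n k : Cpow (ZZ n) k =
  Cmult (Cmult (sgn k) (Q (Cmult (RtoC (INR k)) (Cplus (nu n) (RtoC (3/2)))))) (Cpow (Cmult w w) k).
Proof.
  unfold ZZ. replace (Cdiv (Cmult (Cmult (RtoC 2) w) (Cmult (RtoC 2) w)) (RtoC 4)) with (Cmult w w).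
  rewrite Cpow_mult_l, Cpow_opp, qpow_mul_nat. reflexivity.
  field.
Qed.

Lemma q_tri k : RtoC (q ^ (k * (k - 1))) = Q (RtoC (INR k * (INR k - 1))).
Proof. rewrite <- INR_tri, qpow_nat; auto. Qed.

Lemma E_gen n k : ff n k =
  Cmult (Cmult (Cmult (sgn (n + k)) (Q (FF n k)))
               (qpoch_inf (Q (Cplus (Cplus (nu n) (RtoC 1)) (RtoC (INR k)))) q))
        (Cdiv (Cpow (Cmult w w) k) (qpoch (RtoC q) q k)).
Proof.
  unfold ff, cn, aa, FF. rewrite (Pinf_split q Hq (bb n) k), bb_qk, ZZ_pow, q_tri, sgn_add.
  rewrite !qpow_plus.
  assert (H1 := Pkb_neq0 n k). assert (H2 := Pkq_neq0 k).
  field. auto.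
Qed.

Lemma sgn_S m : sgn (S m) = Copp (sgn m).
Proof.
  unfold sgn. simpl pow. rewrite RtoC_mult.
  replace (RtoC (-1)) with (Copp (RtoC 1)) by (apply injective_projections; simpl; lra). ring.
Qed.

Lemma Q_inv s : Q (Copp s) = Cinv (Q s).
Proof.
  assert (H := Q_neg_pos s). assert (H2 := qpow_neq0 q s).
  transitivity (Cmult (Cmult (Q (Copp s)) (Q s)) (Cinv (Q s))). field; auto.
  rewrite H. ring.
Qed.

Definition L2e (s : C) m := Cminus (Cmult (RtoC (INR m)) s) (RtoC (INR m * (INR m + 1) / 2)).

Lemma L2 (s : C) m : qpoch (Q (Cminus s (RtoC (INR m)))) q m =
  Cmult (Cmult (sgn m) (Q (L2e s m))) (qpoch (Q (Cminus (RtoC 1) s)) q m).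
Proof.
  induction m.
  - unfold L2e, sgn. simpl. replace (Cminus (Cmult (RtoC 0) s) (RtoC (0 * (0 + 1) / 2))) with (RtoC 0).
    rewrite qpow_0; auto. ring. apply injective_projections; simpl; field.
  - rewrite qpoch_S_left; auto.
    assert (E1 : Cmult (Q (Cminus s (RtoC (INR (S m))))) (RtoC q) = Q (Cminus s (RtoC (INR m)))).
    { rewrite <- (qpow_1 q Hq0), <- qpow_plus. f_equal. rewrite S_INR, RtoC_plus. ring. }
    rewrite E1, IHm. simpl qpoch. rewrite sgn_S.
    set (X := Q (Cminus s (RtoC (INR (S m))))).
    assert (EY : Cmult (Q (Cminus (RtoC 1) s)) (RtoC (q ^ m)) = Cinv X).
    { unfold X. rewrite <- Q_inv, <- (qpow_nat q Hq0 m), <- qpow_plus. f_equal. rewrite S_INR, RtoC_plus. ring. }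
    rewrite EY.
    assert (EE : Q (L2e s (S m)) = Cmult (Q (L2e s m)) X).
    { unfold X. rewrite <- qpow_plus. f_equal. unfold L2e. rewrite !S_INR, !RtoC_plus, !RtoC_div, !RtoC_mult, !RtoC_plus.
      field; try cnz. all: lra. }
    rewrite EE. assert (HX : X <> RtoC 0) by apply qpow_neq0. field. auto.
Qed.

Definition rr := sqrt q.
Lemma rr_pos : 0 < rr. Proof. apply sqrt_lt_R0; lra. Qed.
Lemma rr_sq : rr * rr = q. Proof. apply sqrt_sqrt; lra. Qed.

Definition DD := Cmult (Q (Copp (Cdiv (Cmult sigma (Cminus (RtoC 1) sigma)) (RtoC 2))))
                       (qpoch_inf (Q (Cminus (RtoC 1) sigma)) q).

Lemma Q_half_sq k : Q (RtoC (INR k * INR k / 2)) = RtoC (rr ^ (k * k)).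
Proof.
  rewrite qpow_R; auto. f_equal. unfold rr. rewrite <- Rpower_sqrt by lra.
  rewrite <- Rpower_pow by (apply exp_pos). rewrite Rpower_mult, mult_INR. f_equal. field.
Qed.

Lemma FF_L2e m k : Cplus (FF (m + k) k) (L2e (Cminus (RtoC 1) sigma) m) =
  Cplus (Copp (Cdiv (Cmult sigma (Cminus (RtoC 1) sigma)) (RtoC 2))) (RtoC (INR k * INR k / 2)).
Proof.
  unfold FF, AA, nu, L2e. rewrite plus_INR.
  rewrite !RtoC_plus, !RtoC_div, !RtoC_mult, !RtoC_minus, !RtoC_plus. field. all: try lra; try cnz.
Qed.

Lemma eterm_expand k : eterm q rr (Cmult (RtoC rr) (Cmult w w)) k =
  Cdiv (Cmult (RtoC (rr ^ (k * k))) (Cpow (Cmult w w) k)) (qpoch (RtoC q) q k).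
Proof.
  unfold eterm, ecoef. rewrite (qpoch_q q). rewrite Cpow_mult_l, <- RtoC_pow.
  replace (rr ^ (k * k)) with (rr ^ (k * (k - 1)) * rr ^ k).
  2: { rewrite <- pow_add. f_equal. destruct k; simpl; lia. }
  generalize (rq_pos q Hq k). intros.
  rewrite RtoC_div, !RtoC_mult. field. cnz. lra.
Qed.

Lemma E_le m k : ff (m + k) k =
  Cmult (Cmult DD (eterm q rr (Cmult (RtoC rr) (Cmult w w)) k)) (qpoch (Q sigma) q m).
Proof.
  rewrite E_gen.
  replace (Cplus (Cplus (nu (m + k)) (RtoC 1)) (RtoC (INR k))) with (Cminus (Cminus (RtoC 1) sigma) (RtoC (INR m))).
  2: { unfold nu. rewrite plus_INR, RtoC_plus. ring. }
  rewrite (Pinf_split q Hq _ m).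
  replace (Cmult (Q (Cminus (Cminus (RtoC 1) sigma) (RtoC (INR m)))) (RtoC (q ^ m))) with (Q (Cminus (RtoC 1) sigma)).
  2: { rewrite <- (qpow_nat q Hq0 m), <- qpow_plus. f_equal. ring. }
  rewrite L2. replace (Cminus (RtoC 1) (Cminus (RtoC 1) sigma)) with sigma by ring.
  rewrite eterm_expand. unfold DD.
  rewrite <- (Q_half_sq k).
  replace (sgn (m + k + k)) with (Cmult (sgn m) (Cmult (sgn k) (sgn k))) by (rewrite !sgn_add; ring).
  rewrite sgn_sq.
  assert (HE := f_equal Q (FF_L2e m k)). rewrite !qpow_plus in HE.
  assert (H2 := Pkq_neq0 k).
  transitivity (Cmult (Cmult (Cmult (Cmult (Cmult (sgn m) (sgn m)) (Cmult (Q (FF (m + k) k)) (Q (L2e (Cminus (RtoC 1) sigma) m))))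
     (qpoch (Q sigma) q m)) (qpoch_inf (Q (Cminus (RtoC 1) sigma)) q)) (Cdiv (Cpow (Cmult w w) k) (qpoch (RtoC q) q k))).
  - ring.
  - rewrite sgn_sq. unfold FF in HE. rewrite !qpow_plus in HE. unfold FF. rewrite !qpow_plus. rewrite HE. field. auto.
Qed.

Lemma Rpower_decr x y : x <= y -> Rpower q y <= Rpower q x.
Proof.
  intros H. unfold Rpower. apply exp_le'.
  assert (ln q < 0) by (rewrite <- ln_1; apply ln_increasing; lra). nra.
Qed.

Definition c0 := - (Re sigma - Re sigma * Re sigma + Im sigma * Im sigma) / 2 - (1 - 2 * Re sigma) * (1 - 2 * Re sigma) / 8.

Lemma Re_FF n k : Re (FF n k) = - (Re sigma - Re sigma * Re sigma + Im sigma * Im sigma) / 2 + INR k * INR k / 2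
   - (INR n - INR k) * (1 - Re sigma) + (INR n - INR k) * (INR n - INR k + 1) / 2.
Proof.
  unfold FF, AA, nu. destruct sigma as [s t]. unfold Re, Im; simpl. field.
Qed.

Lemma FF_lower n k : INR k * INR k / 2 + c0 <= Re (FF n k).
Proof.
  rewrite Re_FF. unfold c0. set (y := INR n - INR k). set (s := Re sigma).
  assert (0 <= (y + (2 * s - 1) / 2) * (y + (2 * s - 1) / 2)) by apply Rle_0_sqr. nra.
Qed.

Definition K2 := Rpower q c0 * exp (Rpower q (1 - Re sigma) / (1 - q)).
Definition ET k := eterm q rr (Cmult (RtoC rr) (Cmult w w)) k.

Lemma ff_ge n k : (n <= k)%nat -> Cmod (ff n k) <= K2 * Cmod (ET k).
Proof.
  intros Hnk. unfold ET.
  assert (Hr : rr ^ (k * k) <> 0) by (apply pow_nonzero; generalize rr_pos; lra).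
  assert (E : ff n k = Cmult (Cmult (Cmult (sgn (n + k)) (Cdiv (Q (FF n k)) (RtoC (rr ^ (k * k)))))
               (qpoch_inf (Q (Cplus (Cplus (nu n) (RtoC 1)) (RtoC (INR k)))) q))
               (eterm q rr (Cmult (RtoC rr) (Cmult w w)) k)).
  { rewrite E_gen, eterm_expand. assert (H2 := Pkq_neq0 k). field. split; auto. intros X. apply Hr.
    apply (f_equal Re) in X. exact X. }
  rewrite E, !Cmod_mult, Cmod_div. 2: { intros X. apply Hr. apply (f_equal Re) in X. exact X. }
  unfold sgn. rewrite !Cmod_R, pow_1_abs, Rmult_1_l, Cmod_qpow; auto.
  rewrite Rabs_right. 2: apply Rle_ge, pow_le; generalize rr_pos; lra.
  unfold K2. apply Rmult_le_compat_r. apply Cmod_ge_0.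
  apply Rmult_le_compat.
  - apply Rdiv_le_0_compat. left; apply exp_pos. apply pow_lt, rr_pos.
  - apply Cmod_ge_0.
  - apply Rmult_le_reg_r with (rr ^ (k * k)). apply pow_lt, rr_pos.
    unfold Rdiv. rewrite Rmult_assoc, Rinv_l, Rmult_1_r by auto.
    eapply Rle_trans. apply Rpower_decr. apply FF_lower. rewrite Rpower_plus.
    replace (Rpower q (INR k * INR k / 2)) with (rr ^ (k * k)). lra.
    assert (X := Q_half_sq k). rewrite qpow_R in X; auto. apply (f_equal Re) in X. unfold Re in X; simpl in X. auto.
  - eapply Rle_trans. apply Pinf_bound; auto. apply exp_le'. unfold Rdiv. apply Rmult_le_compat_r.
    left; apply Rinv_0_lt_compat; lra. rewrite Cmod_qpow; auto. apply Rpower_decr.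
    unfold nu. simpl. apply le_INR in Hnk. unfold Re. lra.
Qed.

Definition K1 := Cmod DD * exp (Cmod (Q sigma) / (1 - q)).
Definition M0 k := ecoef q rr k * (Cmod (Cmult (RtoC rr) (Cmult w w)) + 1) ^ k.

Lemma ET_bound k : Cmod (ET k) <= M0 k.
Proof. unfold ET, M0. apply eterm_bound; auto; try apply rr_pos; try apply rr_sq. Qed.

Lemma K1_pos : 0 <= K1.
Proof. unfold K1. apply Rmult_le_pos. apply Cmod_ge_0. left; apply exp_pos. Qed.
Lemma K2_pos : 0 <= K2.
Proof. unfold K2. apply Rmult_le_pos. unfold Rpower. left; apply exp_pos. left; apply exp_pos. Qed.

Lemma ff_bound n k : Cmod (ff n k) <= (K1 + K2) * M0 k.
Proof.
  assert (HM : 0 <= M0 k) by (eapply Rle_trans; [apply Cmod_ge_0 | apply ET_bound]).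
  destruct (le_lt_dec k n) as [Hkn | Hnk].
  - replace n with ((n - k) + k)%nat by lia. rewrite E_le.
    rewrite !Cmod_mult. fold (ET k).
    apply Rle_trans with (K1 * M0 k). 2: generalize K2_pos; nra.
    unfold K1. replace (Cmod DD * exp (Cmod (Q sigma) / (1 - q)) * M0 k) with
      (Cmod DD * M0 k * exp (Cmod (Q sigma) / (1 - q))) by ring.
    apply Rmult_le_compat. apply Rmult_le_pos; apply Cmod_ge_0. apply Cmod_ge_0.
    apply Rmult_le_compat_l. apply Cmod_ge_0. apply ET_bound.
    apply qpoch_bound; auto.
  - eapply Rle_trans. apply ff_ge. lia.
    apply Rle_trans with (K2 * M0 k). apply Rmult_le_compat_l. apply K2_pos. apply ET_bound.
    generalize K1_pos; nra.
Qed.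

Lemma ex_M : ex_series (fun k => (K1 + K2) * M0 k).
Proof.
  apply (@ex_series_scal_l R_AbsRing R_NormedModule (K1 + K2) M0).
  unfold M0. apply ex_emaj; auto. apply rr_pos. apply rr_sq.
  generalize (Cmod_ge_0 (Cmult (RtoC rr) (Cmult w w))); lra.
Qed.

Definition SF n := (Series (fun k => Re (ff n k)), Series (fun k => Im (ff n k))).

Lemma ff_ser n : Cser (ff n) (SF n).
Proof. apply Cser_ex with (fun k => (K1 + K2) * M0 k). apply ff_bound. apply ex_M. Qed.

Lemma ff_lim k : Ccv (fun n => ff n k) (Cmult (Cmult DD (ET k)) (qpoch_inf (Q sigma) q)).
Proof.
  apply Ccv_incr_n with k. eapply Ccv_ext. intros n. symmetry. apply E_le.
  apply Ccv_mult. apply Ccv_const. apply qpoch_cv; auto.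
Qed.

Definition GG := Cmult (Cmult DD (qpoch_inf (Q sigma) q)) (qpoch_inf (Copp (Cmult (RtoC rr) (Cmult w w))) q).

Lemma g_ser : Cser (fun k => Cmult (Cmult DD (ET k)) (qpoch_inf (Q sigma) q)) GG.
Proof.
  assert (H := Cser_scal (Cmult DD (qpoch_inf (Q sigma) q)) _ _ (euler_ser q rr Hq rr_pos rr_sq (Cmult (RtoC rr) (Cmult w w)))).
  unfold Cser in *. eapply Ccv_ext. 2: exact H. intros N. apply sum_n_ext. intros k. unfold ET.
  change (Cmult (Cmult DD (qpoch_inf (Q sigma) q)) (eterm q rr (Cmult (RtoC rr) (Cmult w w)) k) =
          Cmult (Cmult DD (eterm q rr (Cmult (RtoC rr) (Cmult w w)) k)) (qpoch_inf (Q sigma) q)). ring.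
Qed.

Lemma SF_lim : Ccv SF GG.
Proof.
  apply tannery_C with ff (fun k => Cmult (Cmult DD (ET k)) (qpoch_inf (Q sigma) q)) (fun k => (K1 + K2) * M0 k).
  apply ff_lim. apply ff_bound. apply ex_M. apply ff_ser. apply g_ser.
Qed.

Lemma phi_val n : phi01 (bb n) q (ZZ n) = Cmult (Cinv (cn n)) (SF n).
Proof.
  rewrite phi01_aa. apply cSeries_eq.
  assert (H := Cser_scal (Cinv (cn n)) _ _ (ff_ser n)). unfold Cser in *.
  eapply Ccv_ext. 2: exact H. intros N. apply sum_n_ext. intros k. unfold ff.
  assert (Hc := cn_neq0 n).
  change (Cmult (Cinv (cn n)) (Cmult (cn n) (aa n k)) = aa n k). field. auto.
Qed.

Lemma X_eq (L : C) n :
  Cmult (Cmult (Cmult (csin (Cmult (RtoC PI) (nu n))) (Q (AA n))) (cexp (Copp (Cmult (nu n) L))))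
        (jfrak (nu n) (Cmult (RtoC 2) w) L q)
  = Cmult (Copp (csin (Cmult (RtoC PI) sigma))) (Cdiv (SF n) (qpoch_inf (RtoC q) q)).
Proof.
  assert (J : jfrak (nu n) (Cmult (RtoC 2) w) L q =
    Cmult (Cmult (Cmult (Q (AA n)) (Cdiv (qpoch_inf (bb n) q) (qpoch_inf (RtoC q) q))) (cexp (Cmult (nu n) L)))
          (phi01 (bb n) q (ZZ n))) by reflexivity.
  rewrite J, phi_val.
  replace (Cmult (RtoC PI) (nu n)) with (Cminus (Copp (Cmult (RtoC PI) sigma)) (RtoC (PI * INR n)))
    by (unfold nu; rewrite RtoC_mult; ring).
  rewrite csin_shift, csin_opp.
  unfold cn. replace (Cmult (RtoC 2) (AA n)) with (Cplus (AA n) (AA n)) by ring. rewrite qpow_plus.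
  assert (E := cexp_opp (Cmult (nu n) L)).
  assert (E2 := cexp_neq0 (Cmult (nu n) L)).
  assert (E1 : cexp (Copp (Cmult (nu n) L)) = Cinv (cexp (Cmult (nu n) L))).
  { transitivity (Cmult (Cmult (cexp (Copp (Cmult (nu n) L))) (cexp (Cmult (nu n) L))) (Cinv (cexp (Cmult (nu n) L)))).
    field; auto. rewrite E. ring. }
  rewrite E1.
  assert (H1 := sgn_neq0 n). assert (H2 := qpow_neq0 q (AA n)). assert (H3 := Pb_neq0 n). assert (H4 := Pq_neq0).
  change (RtoC ((-1) ^ n)) with (sgn n). field. repeat split; auto.
Qed.
End MAIN.

Theorem mainTheorem9 (q : R) (sigma w L : C) :
  0 < q < 1 ->
  w <> RtoC 0 ->
  cexp L = w ->
  (forall m : Z, qpow q sigma <> RtoC (powerRZ q m)) ->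
  filterlim
    (fun n : nat =>
       let nu := Cminus (Copp sigma) (RtoC (INR n)) in
       Cmult (Cmult (Cmult (csin (Cmult (RtoC PI) nu))
                           (qpow q (Cdiv (Cmult nu (Cplus nu (RtoC 1))) (RtoC 4))))
                    (cexp (Copp (Cmult nu L))))
             (jfrak nu (Cmult (RtoC 2) w) L q))
    eventually
    (locally
       (Cmult (Cmult (Copp (csin (Cmult (RtoC PI) sigma)))
                     (qpow q (Copp (Cdiv (Cmult sigma (Cminus (RtoC 1) sigma)) (RtoC 2)))))
              (Cdiv (Cmult (Cmult (qpoch_inf (qpow q sigma) q)
                                  (qpoch_inf (qpow q (Cminus (RtoC 1) sigma)) q))
                           (qpoch_inf (Cmult (Copp (RtoC (sqrt q))) (Cmult w w)) q))
                    (qpoch_inf (RtoC q) q)))).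
Proof.
  intros Hq Hw HL Hs.
  change (Ccv (fun n : nat =>
       let nu := Cminus (Copp sigma) (RtoC (INR n)) in
       Cmult (Cmult (Cmult (csin (Cmult (RtoC PI) nu))
                           (qpow q (Cdiv (Cmult nu (Cplus nu (RtoC 1))) (RtoC 4))))
                    (cexp (Copp (Cmult nu L))))
             (jfrak nu (Cmult (RtoC 2) w) L q))
    (Cmult (Cmult (Copp (csin (Cmult (RtoC PI) sigma)))
                     (qpow q (Copp (Cdiv (Cmult sigma (Cminus (RtoC 1) sigma)) (RtoC 2)))))
              (Cdiv (Cmult (Cmult (qpoch_inf (qpow q sigma) q)
                                  (qpoch_inf (qpow q (Cminus (RtoC 1) sigma)) q))
                           (qpoch_inf (Cmult (Copp (RtoC (sqrt q))) (Cmult w w)) q))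
                    (qpoch_inf (RtoC q) q)))).
  eapply Ccv_ext. intros n. symmetry. apply X_eq; auto.
  replace (Cmult (Cmult (Copp (csin (Cmult (RtoC PI) sigma)))
                     (qpow q (Copp (Cdiv (Cmult sigma (Cminus (RtoC 1) sigma)) (RtoC 2)))))
              (Cdiv (Cmult (Cmult (qpoch_inf (qpow q sigma) q)
                                  (qpoch_inf (qpow q (Cminus (RtoC 1) sigma)) q))
                           (qpoch_inf (Cmult (Copp (RtoC (sqrt q))) (Cmult w w)) q))
                    (qpoch_inf (RtoC q) q)))
    with (Cmult (Copp (csin (Cmult (RtoC PI) sigma))) (Cmult (GG q sigma w) (Cinv (qpoch_inf (RtoC q) q)))).
  - apply (Ccv_mult (fun _ => Copp (csin (Cmult (RtoC PI) sigma)))). apply Ccv_const.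
    apply Ccv_mult. apply SF_lim; auto. apply Ccv_const.
  - unfold GG, DD, rr.
    replace (Copp (Cmult (RtoC (sqrt q)) (Cmult w w))) with (Cmult (Copp (RtoC (sqrt q))) (Cmult w w)) by ring.
    unfold Cdiv. ring.
Qed.
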